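(* Let $H$ be a simple $3$-connected graph and $\mathcal{F}$ an arbitrary family of injective maps from $X=\{a,b,c,d\}$ to $V(H)$. Let $G$ be a $2$-connected graph with $X\subseteq V(G)$ and a $2$-separation $(A,B)$ with $A\cap B=\{u,v\}$, and let $G_A=G[A]\cup\{uv\}$ (with any resulting parallel edge removed). If $X\subseteq A$, then $G$ has an $H(X)$-minor if and only if $G_A$ has an $H(X)$-minor.
   Context: A $2$-separation is a pair $(A,B)$ with $A\cup B=V(G)$, $|A\cap B|\le2$ and no edge between $A\setminus B$ and $B\setminus A$. An $H$-model in $G$ is a family $\{G_x:x\in V(H)\}$ of pairwise vertex-disjoint connected subgraphs of $G$ such that for every edge $xy\in E(H)$ some vertex of $G_x$ is adjacent in $G$ to some vertex of $G_y$. For injective $\pi:X\to V(H)$, $G$ has an $H(X)$-minor with respect to $\pi$ if there is an $H$-model with $w\in V(G_{\pi(w)})$ for all $w\in X$; $G$ has an $H(X)$-minor (with respect to $\mathcal{F}$) if this holds for some $\pi\in\mathcal{F}$. *)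

(* Defs.v *)
From mathcomp Require Import all_boot.
Set Implicit Arguments. Unset Strict Implicit. Unset Printing Implicit Defensive.

Definition simple_graph (V : finType) (e : rel V) : Prop :=
  symmetric e /\ irreflexive e.

Definition restr (V : finType) (e : rel V) (S : {set V}) : rel V :=
  [rel x y | [&& e x y, x \in S & y \in S]].

Definition connected_on (V : finType) (e : rel V) (S : {set V}) : Prop :=
  S != set0 /\ forall x y, x \in S -> y \in S -> connect (restr e S) x y.

Definition k_connected (V : finType) (e : rel V) (k : nat) : Prop :=
  k < #|V| /\ forall S : {set V}, #|S| < k -> connected_on e (~: S).

Definition two_separation (V : finType) (e : rel V) (A B : {set V}) : Prop :=
  A :|: B = setT /\ #|A :&: B| <= 2 /\
  forall x y, x \in A :\: B -> y \in B :\: A -> ~~ e x y.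

(* G_A = G[A] + uv (as a simple relation, no parallel edges), a graph on
   the vertex set A. *)
Definition GA_rel (V : finType) (e : rel V) (A : {set V}) (u v : V) : rel V :=
  [rel x y | [&& x \in A, y \in A &
     [|| e x y, (x == u) && (y == v) | (x == v) && (y == u)]]].

Definition model (VH : finType) (eH : rel VH) (V : finType) (e : rel V)
  (S : {set V}) (M : VH -> {set V}) : Prop :=
  (forall x, M x \subset S) /\
  (forall x, connected_on e (M x)) /\
  (forall x y, x != y -> [disjoint M x & M y]) /\
  (forall x y, eH x y -> exists a b, [/\ a \in M x, b \in M y & e a b]).

Definition has_HX_minor_wrt (VH : finType) (eH : rel VH) (V : finType)
  (e : rel V) (S : {set V}) (X : {set V}) (pi : V -> VH) : Prop :=
  exists M, model eH e S M /\ forall w, w \in X -> w \in M (pi w).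

Definition has_HX_minor (VH : finType) (eH : rel VH) (V : finType)
  (e : rel V) (S : {set V}) (X : {set V}) (F : (V -> VH) -> Prop) : Prop :=
  exists pi, F pi /\ has_HX_minor_wrt eH e S X pi.

(* Main.v *)
Require Import Defs.
From mathcomp Require Import all_boot.
Set Implicit Arguments. Unset Strict Implicit. Unset Printing Implicit Defensive.

Lemma closP (T : finType) (r : rel T) (S : {set T}) x y :
  (forall p q, p \in S -> r p q -> q \in S) -> x \in S -> connect r x y -> y \in S.
Proof.
move=> cl Px /connectP [p pth ->]; elim: p x Px pth => //= z p IH x Px /andP[rxz pth].
exact: IH (cl _ _ Px rxz) pth.
Qed.

Lemma exitP (T : finType) (r : rel T) (S : {set T}) x y :
  x \in S -> y \notin S -> connect r x y ->
  exists p q, [/\ p \in S, q \notin S & r p q].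
Proof.
move=> xS yS c.
case: (boolP [exists p, exists q, [&& p \in S, q \notin S & r p q]]).
  by move/existsP=> [p /existsP [q /and3P[? ? ?]]]; exists p, q.
rewrite negb_exists => /forallP H; exfalso.
have: y \in S.
  apply: (closP _ xS c) => p q pS rpq; apply/negPn/negP => qS.
  by have:= H p; rewrite negb_exists => /forallP /(_ q); rewrite pS qS rpq.
by rewrite (negbTE yS).
Qed.

Lemma restr_mono (T : finType) (e : rel T) (S S' : {set T}) x y :
  S \subset S' -> connect (restr e S) x y -> connect (restr e S') x y.
Proof.
move=> sub; apply: connect_sub => a b /= /and3P[eab aS bS].
by apply: connect1; apply/and3P; split=> //; apply: (subsetP sub).
Qed.

Lemma restr_sym (T : finType) (e : rel T) (S : {set T}) :
  symmetric e -> symmetric (restr e S).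
Proof. by move=> sym a b; rewrite /restr /= sym; case: (a \in S); case: (b \in S); rewrite ?andbF. Qed.

Lemma restr_csym (T : finType) (e : rel T) (S : {set T}) x y :
  symmetric e -> connect (restr e S) x y -> connect (restr e S) y x.
Proof. by move=> sym; rewrite (sym_connect_sym (restr_sym S sym)). Qed.

Lemma connect_in (T : finType) (r : rel T) (S : {set T}) x y :
  x \in S -> connect (restr r S) x y -> y \in S.
Proof. by move=> xS; apply: closP xS => p q _ /and3P[]. Qed.

Lemma disjP (T : finType) (A B : {set T}) :
  (forall z, z \in A -> z \in B -> False) -> [disjoint A & B].
Proof.
move=> H; apply/pred0P => z /=; apply/negP => /andP[].
exact: H.
Qed.

Lemma disjE (T : finType) (A B : {set T}) z :
  [disjoint A & B] -> z \in A -> z \in B -> False.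
Proof. by move=> d zA; rewrite (disjointFr d zA). Qed.

Lemma notA_B (V : finType) (e : rel V) (A B : {set V}) z :
  two_separation e A B -> z \notin A -> z \in B.
Proof.
move=> [AUB _] zA; have : z \in A :|: B by rewrite AUB inE.
by rewrite inE (negbTE zA).
Qed.

Lemma sideB (V : finType) (e : rel V) (A B : {set V}) z y :
  symmetric e -> two_separation e A B -> z \in B :\: A -> e z y -> y \in B.
Proof.
move=> sym sep zBA ezy; apply/negPn/negP => yB.
have yA : y \in A by apply/negPn/negP => yA; rewrite (notA_B sep yA) in yB.
case: sep => [_ [_ sp]]; have := sp y z; rewrite inE yB yA => /(_ isT zBA).
by rewrite sym ezy.
Qed.

Lemma inAB (V : finType) (A B : {set V}) u v z :
  A :&: B = [set u; v] -> z \in A -> z \in B -> (z == u) || (z == v).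
Proof. by move=> AB zA zB; rewrite -in_set2 -AB inE zA zB. Qed.

Lemma uvA (V : finType) (A B : {set V}) u v :
  A :&: B = [set u; v] -> [/\ u \in A, v \in A, u \in B & v \in B].
Proof.
move=> AB; have: u \in A :&: B by rewrite AB !inE eqxx.
have: v \in A :&: B by rewrite AB !inE eqxx orbT.
by rewrite !inE => /andP[-> ->] /andP[-> ->].
Qed.

Lemma L1 (V : finType) (e : rel V) (A B : {set V}) u v (S : {set V}) p q :
  symmetric e -> two_separation e A B -> A :&: B = [set u; v] ->
  (forall x y, x \in S -> y \in S -> connect (restr e S) x y) ->
  p \in S -> p \in B :\: A -> q \in S -> q \in A -> (u \in S) || (v \in S).
Proof.
move=> sym sep AB conn pS pBA qS qA.
have qBA : q \notin B :\: A by rewrite inE qA.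
have [c [z [cBA zBA /and3P[ecz cS zS]]]] := exitP pBA qBA (conn _ _ pS qS).
have zB := sideB sym sep cBA ecz.
have zA : z \in A by move: zBA; rewrite inE zB andbT negbK.
by case/orP: (inAB AB zA zB) => /eqP <-; rewrite zS ?orbT.
Qed.

Lemma L2 (V : finType) (e : rel V) (A B : {set V}) u v (S : {set V}) p :
  symmetric e -> two_separation e A B -> A :&: B = [set u; v] ->
  (forall x y, x \in S -> y \in S -> connect (restr e S) x y) ->
  (exists q, q \in S /\ q \in A) ->
  p \in S -> p \in B -> (u \in S) || (v \in S).
Proof.
move=> sym sep AB conn [q [qS qA]] pS pB.
case pA: (p \in A).
  by case/orP: (inAB AB pA pB) => /eqP <-; rewrite pS ?orbT.
by apply: (L1 sym sep AB conn pS _ qS qA); rewrite inE pA pB.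
Qed.

Lemma meetsA (VH : finType) (eH : rel VH) (V : finType) (e : rel V)
  (X A B : {set V}) u v (pi : V -> VH) M :
  symmetric e -> k_connected eH 3 -> #|X| = 4 -> {in X &, injective pi} ->
  two_separation e A B -> A :&: B = [set u; v] -> X \subset A ->
  model eH e setT M -> (forall w, w \in X -> w \in M (pi w)) ->
  forall x, exists q, q \in M x /\ q \in A.
Proof.
move=> sym [_ H3] HX inj sep AB XA [_ [Mconn [Mdisj Medge]]] Xin x0.
case: (boolP [exists q, (q \in M x0) && (q \in A)]).
  by move/existsP=> [q /andP[]]; eauto.
rewrite negb_exists => /forallP nx0; exfalso.
have [uA vA _ _] := uvA AB.
set J := [set y | [forall q, (q \in M y) ==> (q \notin A)]].
set S := [set y | (u \in M y) || (v \in M y)].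
have cS1 : forall w, #|[set y | w \in M y]| <= 1.
  move=> w; apply/card_le1_eqP => y1 y2; rewrite !inE => h1 h2.
  apply/eqP; apply/negPn/negP => ne.
  exact: (disjE (Mdisj _ _ ne) h2 h1).
have cS : #|S| <= 2.
  have -> : S = [set y | u \in M y] :|: [set y | v \in M y].
    by apply/setP=> y; rewrite !inE.
  rewrite cardsU; apply: leq_trans (leq_subr _ _) _.
  exact: (leq_add (cS1 u) (cS1 v)).
have [y0 yX yS] : exists2 y, y \in pi @: X & y \notin S.
  apply/subsetPn; apply/negP => sub.
  have := subset_leq_card sub; rewrite card_in_imset // HX => h.
  by have := leq_trans h cS.
case/imsetP: yX => w wX ew; rewrite ew in yS.
have x0S : x0 \notin S.
  rewrite inE; apply/norP; split; apply/negP => h.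
    by have := nx0 u; rewrite h uA.
  by have := nx0 v; rewrite h vA.
have cS3 : #|S| < 3 by rewrite ltnS.
have [_ c] := H3 S cS3.
have cx : connect (restr eH (~:S)) x0 (pi w) by apply: c; rewrite inE.
have x0J : x0 \in J.
  rewrite inE; apply/forallP => q; apply/implyP => qM.
  by have := nx0 q; rewrite qM.
have wJ : pi w \notin J.
  rewrite inE negb_forall; apply/existsP; exists w.
  by rewrite Xin // (subsetP XA).
have [y [z [yJ zJ /and3P[eyz _ zS]]]] := exitP x0J wJ cx.
have [a [b [aM bM eab]]] := Medge _ _ eyz.
have aA : a \notin A by move: yJ; rewrite inE => /forallP /(_ a); rewrite aM.
have aBA : a \in B :\: A by rewrite inE aA (notA_B sep aA).
have bB := sideB sym sep aBA eab.
have zA : exists q, q \in M z /\ q \in A.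
  move: zJ; rewrite inE negb_forall => /existsP [q].
  by rewrite negb_imply negbK => /andP[]; eauto.
have := L2 sym sep AB (Mconn z).2 zA bM bB.
by move: zS; rewrite !inE => /negbTE ->.
Qed.

Lemma dir1 (VH : finType) (eH : rel VH) (V : finType) (e : rel V)
  (X A B : {set V}) u v (pi : V -> VH) M :
  simple_graph eH -> symmetric e -> k_connected eH 3 -> #|X| = 4 -> {in X &, injective pi} ->
  two_separation e A B -> A :&: B = [set u; v] -> X \subset A ->
  model eH e setT M -> (forall w, w \in X -> w \in M (pi w)) ->
  has_HX_minor_wrt eH (GA_rel e A u v) A X pi.
Proof.
move=> [_ irrH] sym H3 HX inj sep AB XA Mod Xin.
have mA := meetsA sym H3 HX inj sep AB XA Mod Xin.
case: Mod => [_ [Mconn [Mdisj Medge]]].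
have [uA vA uB vB] := uvA AB.
exists (fun x => M x :&: A); split; last first.
  by move=> w wX; rewrite inE Xin // (subsetP XA).
split; first by move=> x; apply: subsetIr.
split.
  move=> x; split.
    by have [q [qM qA]] := mA x; apply/set0Pn; exists q; rewrite inE qM qA.
  move=> a b; rewrite !inE => /andP[aM aA] /andP[bM bA].
  set R := restr (GA_rel e A u v) (M x :&: A).
  set K := [set y | connect R a y].
  have aK : a \in K by rewrite inE connect0.
  have KMA : forall y, y \in K -> y \in M x :&: A.
    by move=> y; rewrite inE; apply: connect_in; rewrite inE aM aA.
  have Kstep : forall y y', y \in K -> y' \in M x :&: A ->
      GA_rel e A u v y y' -> y' \in K.
    move=> y y' yK y'MA g; have yMA := KMA _ yK.
    rewrite /K !inE in yK *; apply: connect_trans yK (connect1 _).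
    by apply/and3P; split.
  have uvK : forall q, q \in M x -> (q == u) || (q == v) ->
      (u \in K) || (v \in K) -> q \in K.
    move=> q qM quv c; case/orP: quv => /eqP qe; subst q;
      case/orP: c => // hK.
      by apply: (Kstep _ _ hK); rewrite /GA_rel /= ?inE ?qM ?uA ?vA ?eqxx ?orbT.
    by apply: (Kstep _ _ hK); rewrite /GA_rel /= ?inE ?qM ?uA ?vA ?eqxx ?orbT.
  have pAB : forall p q, p \in A -> q \notin A -> e p q -> p \in B.
    move=> p q pA qA epq; apply: (sideB sym sep (z := q)); last by rewrite sym.
    by rewrite inE qA (notA_B sep qA).
  case cond: ((u \in K) || (v \in K)).
    have: b \in K :|: (M x :\: A).
      have a2 : a \in K :|: (M x :\: A) by rewrite in_setU aK.
      apply: (closP _ a2 ((Mconn x).2 a b aM bM)).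
      move=> p q pK2 /and3P[epq pM qM].
      case qA: (q \in A); last by rewrite in_setU in_setD qA qM orbT.
      case pK: (p \in K).
        have pA : p \in A by move: (KMA _ pK); rewrite inE => /andP[].
        by rewrite in_setU (Kstep p q pK) // ?inE ?qM ?qA // /GA_rel /= pA qA epq.
      move: pK2; rewrite in_setU pK in_setD /= => /andP[pA _].
      have pBA : p \in B :\: A by rewrite inE pA (notA_B sep pA).
      have qB := sideB sym sep pBA epq.
      by rewrite in_setU (uvK q qM (inAB AB qA qB) cond).
    by rewrite in_setU in_setD bA /= orbF /K inE.
  have: b \in K.
    apply: (closP _ aK ((Mconn x).2 a b aM bM)).
    move=> p q pK /and3P[epq pM qM].
    have pA : p \in A by move: (KMA _ pK); rewrite inE => /andP[].
    case qA: (q \in A).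
      by apply: (Kstep p q pK); rewrite ?inE ?qM ?qA // /GA_rel /= pA qA epq.
    have pB := pAB p q pA (negbT qA) epq.
    by case/orP: (inAB AB pA pB) => /eqP pe; subst p; rewrite pK ?orbT in cond.
  by rewrite /K inE.
split.
  move=> x y ne; apply: disjP => z; rewrite !inE => /andP[zx _] /andP[zy _].
  exact: disjE (Mdisj _ _ ne) zx zy.
move=> x y exy; have [a [b [aM bM eab]]] := Medge _ _ exy.
case abA: ((a \in A) && (b \in A)).
  case/andP: abA => aA bA.
  by exists a, b; rewrite !inE aM aA bM bA; split => //; rewrite /GA_rel /= aA bA eab.
have [aB bB] : a \in B /\ b \in B.
  case aA: (a \in A); case bA: (b \in A); rewrite ?aA ?bA in abA => //.
  - split; last by apply: (notA_B sep); rewrite bA.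
    by apply: (sideB sym sep (z := b)); [rewrite inE bA (notA_B sep (negbT bA)) | rewrite sym].
  - split; first by apply: (notA_B sep); rewrite aA.
    by apply: (sideB sym sep (z := a)); rewrite // inE aA (notA_B sep (negbT aA)).
  - split; first by apply: (notA_B sep); rewrite aA.
    by apply: (notA_B sep); rewrite bA.
have ne : x != y by apply: contraTneq exy => ->; rewrite irrH.
have hx := L2 sym sep AB (Mconn x).2 (mA x) aM aB.
have hy := L2 sym sep AB (Mconn y).2 (mA y) bM bB.
case/orP: hx => hx; case/orP: hy => hy;
  try by case: (disjE (Mdisj _ _ ne) hx hy).
- by exists u, v; rewrite !inE hx hy uA vA; split => //; rewrite /GA_rel /= ?uA ?vA !eqxx /= ?orbT.
- by exists v, u; rewrite !inE hx hy uA vA; split => //; rewrite /GA_rel /= ?uA ?vA !eqxx /= ?orbT.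
Qed.

Definition comp (V : finType) (e : rel V) (S : {set V}) y0 :=
  [set y | (y \in S) && connect (restr e S) y0 y].

Lemma comp_conn (V : finType) (e : rel V) (S : {set V}) y0 :
  symmetric e -> y0 \in S -> forall p q, p \in comp e S y0 -> q \in comp e S y0 ->
  connect (restr e (comp e S y0)) p q.
Proof.
move=> sym y0S.
set C := comp e S y0.
have y0C : y0 \in C by rewrite inE y0S connect0.
have h : forall c, c \in C -> connect (restr e C) y0 c.
  move=> c; rewrite inE => /andP[_ cc].
  set P := [set z | connect (restr e C) y0 z].
  have : c \in P; last by rewrite inE.
  apply: (closP _ _ cc); last by rewrite inE connect0.
  move=> p q; rewrite inE => pP /and3P[epq pS qS].
  have pC := connect_in y0C pP.
  have qC : q \in C.
    move: (pC); rewrite inE => /andP[_ cp].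
    rewrite inE qS; apply: connect_trans cp (connect1 _).
    by apply/and3P; split.
  by rewrite inE; apply: connect_trans pP (connect1 _); apply/and3P; split.
move=> p q pC qC.
exact: connect_trans (restr_csym sym (h p pC)) (h q qC).
Qed.

Lemma comp_nbr (V : finType) (e : rel V) (A B : {set V}) u v y0 a0 :
  symmetric e -> k_connected e 2 -> two_separation e A B -> A :&: B = [set u; v] ->
  y0 \in B :\: A -> a0 \in A :\: B ->
  exists c, c \in comp e (B :\: A) y0 /\ e c u.
Proof.
move=> sym [_ k2] sep AB y0BA a0AB.
have [uA vA uB vB] := uvA AB.
have c1 : #|[set v]| < 2 by rewrite cards1.
have [_ c2] := k2 _ c1.
have y0v : y0 != v.
  by apply: contraTneq y0BA => ->; rewrite inE vA.
have a0v : a0 != v.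
  by apply: contraTneq a0AB => ->; rewrite inE vB.
have cx : connect (restr e (~: [set v])) y0 a0 by apply: c2; rewrite !inE.
have y0C : y0 \in comp e (B :\: A) y0 by rewrite inE y0BA connect0.
have a0C : a0 \notin comp e (B :\: A) y0.
  by rewrite !inE; move: a0AB; rewrite !inE => /andP[_ ->].
have [c [z [cC zC /and3P[ecz _ zv]]]] := exitP y0C a0C cx.
have cBA : c \in B :\: A by move: cC; rewrite inE => /andP[].
have zB := sideB sym sep cBA ecz.
case zA: (z \in A).
  case/orP: (inAB AB zA zB) => /eqP ze.
    by exists c; rewrite -ze.
  by move: zv; rewrite !inE ze eqxx.
exfalso; move/negP: zC; apply.
have zBA : z \in B :\: A by rewrite inE zA zB.
move: (cC); rewrite inE => /andP[_ cc].
rewrite inE zBA; apply: connect_trans cc (connect1 _).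
by apply/and3P; split.
Qed.

Lemma dir2 (VH : finType) (eH : rel VH) (V : finType) (e : rel V)
  (X A B : {set V}) u v (pi : V -> VH) M :
  symmetric e -> k_connected e 2 -> two_separation e A B -> A :&: B = [set u; v] ->
  B :\: A != set0 -> (exists a0, a0 \in A :\: B) ->
  model eH (GA_rel e A u v) A M -> (forall w, w \in X -> w \in M (pi w)) ->
  has_HX_minor_wrt eH e setT X pi.
Proof.
move=> sym k2 sep AB BAn [a0 a0AB] Mod Xin.
have [y0 y0BA] := set0Pn _ BAn.
have AB' : A :&: B = [set v; u] by rewrite AB setUC.
have [cu [cuC ecu]] := comp_nbr sym k2 sep AB y0BA a0AB.
have [cv [cvC ecv]] := comp_nbr sym k2 sep AB' y0BA a0AB.
set C := comp e (B :\: A) y0 in cuC cvC.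
have Cconn : forall p q, p \in C -> q \in C -> connect (restr e C) p q.
  by apply: comp_conn.
have CBA : forall z, z \in C -> z \in B :\: A by move=> z; rewrite inE => /andP[].
case: Mod => [MA [Mconn [Mdisj Medge]]].
have CA : forall z x, z \in C -> z \in M x -> False.
  move=> z x zC zM; have := CBA _ zC; rewrite inE (subsetP (MA x) _ zM).
  by [].
pose M' x := if u \in M x then M x :|: C else M x.
have MM' : forall x, M x \subset M' x.
  by move=> x; rewrite /M'; case: ifP => _; [apply: subsetUl | apply: subxx].
have CM' : forall x, u \in M x -> C \subset M' x.
  by move=> x ux; rewrite /M' ux; apply: subsetUr.
have hM' : forall z x, z \in M' x -> z \in M x \/ (u \in M x /\ z \in C).
  move=> z x; rewrite /M'; case: ifP => ux; last by left.
  by rewrite in_setU => /orP[]; [left | right].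
exists M'; split; last first.
  by move=> w wX; apply: (subsetP (MM' _)); apply: Xin.
split; first by move=> x; apply: subsetT.
split.
  move=> x; have [ne0 cx] := Mconn x.
  have [p0 p0M] := set0Pn _ ne0.
  split; first by apply/set0Pn; exists p0; apply: (subsetP (MM' x)).
  set R := restr e (M' x).
  have Cin : forall p q, u \in M x -> p \in C -> q \in C -> connect R p q.
    by move=> p q uM pC qC; apply: restr_mono (CM' _ uM) (Cconn _ _ pC qC).
  have ucu : u \in M x -> R u cu.
    move=> uM; apply/and3P; split; first by rewrite sym.
      exact: (subsetP (MM' x)).
    exact: (subsetP (CM' x uM)).
  have uv : u \in M x -> v \in M x -> connect R u v.
    move=> uM vM; apply: connect_trans (connect1 (ucu uM)) _.
    apply: connect_trans (Cin _ _ uM cuC cvC) (connect1 _).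
    apply/and3P; split => //; first exact: (subsetP (CM' x uM)).
    exact: (subsetP (MM' x)).
  have h1 : forall q, q \in M x -> connect R p0 q.
    move=> q qM; set P := [set z | connect R p0 z].
    have : q \in P; last by rewrite inE.
    apply: (closP _ _ (cx p0 q p0M qM)); last by rewrite inE connect0.
    move=> p q'; rewrite inE => pP /and3P[g pM q'M].
    rewrite inE; apply: connect_trans pP _.
    move: g; rewrite /GA_rel /= => /and3P[_ _ /or3P[epq | /andP[/eqP pu /eqP qv] | /andP[/eqP pv /eqP qu]]].
    - apply: connect1; apply/and3P; split => //; exact: (subsetP (MM' x)).
    - by rewrite pu qv; rewrite pu in pM; rewrite qv in q'M; apply: uv.
    - rewrite pv qu; rewrite pv in pM; rewrite qu in q'M.
      exact: restr_csym sym (uv q'M pM).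
  have h2 : forall q, q \in M' x -> connect R p0 q.
    move=> q qM'; case: (hM' _ _ qM') => [qM|[uM qC]]; first exact: h1.
    apply: connect_trans (h1 u uM) _.
    exact: connect_trans (connect1 (ucu uM)) (Cin _ _ uM cuC qC).
  move=> p q pM' qM'.
  exact: connect_trans (restr_csym sym (h2 p pM')) (h2 q qM').
split.
  move=> x y ne; apply: disjP => z zx zy.
  case: (hM' _ _ zx) => [zx'|[ux zC]]; case: (hM' _ _ zy) => [zy'|[uy zC']].
  - exact: disjE (Mdisj _ _ ne) zx' zy'.
  - exact: CA zC' zx'.
  - exact: CA zC zy'.
  - exact: disjE (Mdisj _ _ ne) ux uy.
move=> x y exy; have [a [b [aM bM g]]] := Medge _ _ exy.
move: g; rewrite /GA_rel /= => /and3P[_ _ /or3P[eab | /andP[/eqP au /eqP bv] | /andP[/eqP av /eqP bu]]].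
- by exists a, b; split => //; apply: (subsetP (MM' _)).
- rewrite au in aM; rewrite bv in bM.
  exists cv, v; split => //; first exact: (subsetP (CM' x aM)).
  exact: (subsetP (MM' _)).
- rewrite av in aM; rewrite bu in bM.
  exists v, cv; split; first exact: (subsetP (MM' _)).
    exact: (subsetP (CM' y bM)).
  by rewrite sym.
Qed.

Theorem mainTheorem12 (VH : finType) (eH : rel VH) (V : finType) (e : rel V)
  (X : {set V}) (F : (V -> VH) -> Prop) (A B : {set V}) (u v : V) :
  simple_graph eH -> k_connected eH 3 ->
  #|X| = 4 ->
  (forall pi, F pi -> {in X &, injective pi}) ->
  simple_graph e -> k_connected e 2 ->
  two_separation e A B -> A :&: B = [set u; v] -> B :\: A != set0 ->
  X \subset A ->
  (has_HX_minor eH e setT X F <-> has_HX_minor eH (GA_rel e A u v) A X F).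
Proof.
move=> sH H3 HX injF [sym _] k2 sep AB BAn XA; split.
  move=> [pi [Fpi [M [Mod Xin]]]]; exists pi; split => //.
  exact: (dir1 sH sym H3 HX (injF _ Fpi) sep AB XA Mod Xin).
move=> [pi [Fpi [M [Mod Xin]]]]; exists pi; split => //.
have a0 : exists a0, a0 \in A :\: B.
  have : ~~ (X \subset A :&: B).
    apply/negP => sub; have := subset_leq_card sub.
    by rewrite HX; case: sep => [_ [c _]] h; have := leq_trans h c.
  case/subsetPn => w wX wAB; exists w.
  by move: wAB; rewrite !inE (subsetP XA _ wX) andbT.
exact: (dir2 sym k2 sep AB BAn a0 Mod Xin).
Qed.
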